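(* With the notation of the context, for every $\lambda\in[0,1]$ the state transition matrix $\Phi(\lambda,0)=\exp\!\big(\int_0^\lambda A(\mu)\,d\mu\big)$ of the EDH flow matrix satisfies $$\Phi(\lambda,0)=I+PH^\top R^{-1/2}\big[(I+\lambda D)^{-1/2}-I\big]D^{-1}R^{-1/2}H=I+E\,\Omega(\lambda)\,F^\top,$$ where $\Omega(\lambda)=\mathrm{diag}(\omega_1(\lambda),\dots,\omega_{n_z}(\lambda))$, $\omega_i(\lambda)=\dfrac{(1+\lambda\alpha_i)^{-1/2}-1}{\alpha_i}$.
   Context: $P\in\mathbb{R}^{n_x\times n_x}$, $R\in\mathbb{R}^{n_z\times n_z}$ symmetric positive definite, $H\in\mathbb{R}^{n_z\times n_x}$ of full row rank. $R^{-1/2}$ is the inverse of the symmetric positive definite square root of $R$. The EDH flow matrix is $A(\lambda)=-\tfrac12 PH^\top(\lambda HPH^\top+R)^{-1}H$ for $\lambda\in[0,1]$. Let $D=R^{-1/2}HPH^\top R^{-1/2}=V\Lambda V^\top$ with $V$ orthogonal and $\Lambda=\mathrm{diag}(\alpha_1,\dots,\alpha_{n_z})$, $\alpha_i>0$. Define $E=PH^\top R^{-1/2}V$ and $F^\top=V^\top R^{-1/2}H$. $(I+\lambda D)^{-1/2}$ denotes the inverse of the symmetric positive definite square root of $I+\lambda D$. *)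

(* Defs.v *)
From HB Require Import structures.
From mathcomp Require Import all_boot all_order all_algebra.
From mathcomp Require Import all_classical all_reals all_analysis.
Set Implicit Arguments. Unset Strict Implicit. Unset Printing Implicit Defensive.
Import Order.TTheory GRing.Theory Num.Theory.
Import numFieldNormedType.Exports.
Local Open Scope ring_scope.
Local Open Scope classical_set_scope.

Definition sym_posdef (R : realType) (n : nat) (M : 'M[R]_n) : Prop :=
  M^T = M /\ forall x : 'cV[R]_n, x != 0 -> 0 < (x^T *m M *m x) 0 0.

Definition mxpow (R : realType) (n : nat) (M : 'M[R]_n) (k : nat) : 'M[R]_n :=
  iter k (mulmx M) 1%:M.

Definition mxexp (R : realType) (n : nat) (M : 'M[R]_n) : 'M[R]_n :=
  \matrix_(i, j) limn (fun N : nat =>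
     (\sum_(k < N) (k`!%:R)^-1 *: mxpow M k) i j).

Definition mxint (R : realType) (m n : nat) (f : R -> 'M[R]_(m, n)) (a b : R)
  : 'M[R]_(m, n) :=
  \matrix_(i, j) (\int[@lebesgue_measure R]_(x in `[a, b]) f x i j).

Definition edhA (R : realType) (nx nz : nat) (P : 'M[R]_nx) (Rm : 'M[R]_nz)
  (H : 'M[R]_(nz, nx)) (lam : R) : 'M[R]_nx :=
  (- 2^-1) *: (P *m H^T *m invmx (lam *: (H *m P *m H^T) + Rm) *m H).

Definition edhPhi (R : realType) (nx nz : nat) (P : 'M[R]_nx) (Rm : 'M[R]_nz)
  (H : 'M[R]_(nz, nx)) (lam : R) : 'M[R]_nx :=
  mxexp (mxint (edhA P Rm H) 0 lam).

(* Main.v *)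
Require Import Defs.
From HB Require Import structures.
From mathcomp Require Import all_boot all_order all_algebra.
From mathcomp Require Import all_classical all_reals all_analysis.
Import Order.TTheory GRing.Theory Num.Theory.
Local Open Scope ring_scope.
From mathcomp Require Import ring.

Module Helpers.
Section LA.
Variable R : realType.

Lemma inv_of {n} (A B : 'M[R]_n) : A *m B = 1%:M -> invmx A = B.
Proof.
move=> h; have [uA _] := mulmx1_unit h.
by rewrite -[B]mul1mx -(mulVmx uA) -mulmxA h mulmx1.
Qed.

Lemma pd_unit {n} (M : 'M[R]_n) :
  (forall x : 'cV[R]_n, x != 0 -> 0 < (x^T *m M *m x) 0 0) -> M \in unitmx.
Proof.
move=> pd; rewrite unitmxE unitfE; apply/negP => /det0P[v v0 vM].
have := pd v^T; rewrite trmx_eq0 v0 trmxK vM mul0mx mxE ltxx.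
by move/(_ isT).
Qed.

Definition dg {n} (w : 'I_n -> R) : 'M[R]_n := diag_mx (\row_i w i).

Lemma dgM {n} (u w : 'I_n -> R) : dg u *m dg w = dg (fun i => u i * w i).
Proof. by rewrite mulmx_diag; congr diag_mx; apply/rowP => i; rewrite !mxE. Qed.

Lemma dg1 {n} : dg (fun _ : 'I_n => 1) = 1%:M.
Proof. by rewrite /dg -diag_const_mx; congr diag_mx; apply/rowP => i; rewrite !mxE. Qed.

Lemma dgD {n} (u w : 'I_n -> R) : dg u + dg w = dg (fun i => u i + w i).
Proof. by rewrite /dg -linearD /=; congr diag_mx; apply/rowP => i; rewrite !mxE. Qed.

Lemma dgB {n} (u w : 'I_n -> R) : dg u - dg w = dg (fun i => u i - w i).
Proof. by rewrite /dg -linearB /=; congr diag_mx; apply/rowP => i; rewrite !mxE. Qed.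

Lemma dgZ {n} a (u : 'I_n -> R) : a *: dg u = dg (fun i => a * u i).
Proof. by rewrite /dg -linearZ /=; congr diag_mx; apply/rowP => i; rewrite !mxE. Qed.

Lemma dg_ext {n} {u w : 'I_n -> R} : (forall i, u i = w i) -> dg u = dg w.
Proof. by move=> h; congr diag_mx; apply/rowP => i; rewrite !mxE h. Qed.

Lemma ent {m n p} (A : 'M[R]_(m, n)) (w : 'I_n -> R) (B : 'M[R]_(n, p)) i j :
  (A *m dg w *m B) i j = \sum_k A i k * w k * B k j.
Proof. by rewrite mxE; apply: eq_bigr => k _; rewrite mul_mx_diag !mxE. Qed.

Variable n : nat.
Variable V : 'M[R]_n.
Hypothesis hV : V^T *m V = 1%:M.

Lemma hV' : V *m V^T = 1%:M.
Proof. exact: mulmx1C. Qed.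

Lemma conjM (u w : 'I_n -> R) :
  V *m dg u *m V^T *m (V *m dg w *m V^T) = V *m dg (fun i => u i * w i) *m V^T.
Proof.
by rewrite !mulmxA -(mulmxA _ V^T V) hV mulmx1 -(mulmxA V) dgM.
Qed.

Lemma conj_inv (u w : 'I_n -> R) : (forall i, u i * w i = 1) ->
  invmx (V *m dg u *m V^T) = V *m dg w *m V^T.
Proof.
move=> h; apply: inv_of; rewrite conjM (dg_ext h) dg1 mulmx1; exact: hV'.
Qed.

Lemma mxdg_ent (A : 'M[R]_n) (d : 'I_n -> R) i j : (A *m dg d) i j = A i j * d j.
Proof. by rewrite mul_mx_diag !mxE. Qed.

Lemma dgmx_ent (A : 'M[R]_n) (d : 'I_n -> R) i j : (dg d *m A) i j = d i * A i j.
Proof. by rewrite mul_diag_mx !mxE. Qed.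

Lemma comm_sqrt (W : 'M[R]_n) (d : 'I_n -> R) :
  (forall i j, W i j * d j = d i * W i j) ->
  W *m dg (fun i => Num.sqrt (d i)) = dg (fun i => Num.sqrt (d i)) *m W.
Proof.
move=> comm; apply/matrixP => i j; rewrite mxdg_ent dgmx_ent.
have [->|Wn0] := eqVneq (W i j) 0; first by rewrite mul0r mulr0.
have := comm i j; rewrite [d i * _]mulrC => /eqP; rewrite -subr_eq0 -mulrBr.
by rewrite mulf_eq0 (negPf Wn0) /= subr_eq0 => /eqP ->; rewrite mulrC.
Qed.

Lemma quad_dg (s : 'I_n -> R) (x : 'cV[R]_n) : (forall i, 0 <= s i) ->
  0 <= (x^T *m dg s *m x) 0 0.
Proof.
move=> hs; rewrite ent; apply: sumr_ge0 => k _; rewrite mxE.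
by rewrite mulrC mulrA mulr_ge0 // -expr2 sqr_ge0.
Qed.

Lemma sqrt_unique (S : 'M[R]_n) (d : 'I_n -> R) : (forall i, 0 <= d i) ->
  sym_posdef S -> S *m S = V *m dg d *m V^T ->
  S = V *m dg (fun i => Num.sqrt (d i)) *m V^T.
Proof.
move=> d0 [_ Spd] hS.
set s := fun i => Num.sqrt (d i).
set W := V^T *m S *m V.
have hW2 : W *m W = dg d.
  rewrite /W !mulmxA -(mulmxA _ V V^T) hV' mulmx1 -(mulmxA _ S S) hS.
  by rewrite !mulmxA hV mul1mx -mulmxA hV mulmx1.
have comm : forall i j, W i j * d j = d i * W i j.
  move=> i j.
  have := congr1 (fun M : 'M[R]_n => M i j) (mulmxA W W W).
  by rewrite hW2 mxdg_ent dgmx_ent.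
have commS : W *m dg s = dg s *m W by exact: comm_sqrt.
have ss : dg s *m dg s = dg d.
  by rewrite dgM; apply: dg_ext => i; rewrite /s -expr2 sqr_sqrtr.
have prod0 : (W - dg s) *m (W + dg s) = 0.
  rewrite mulmxDr !mulmxBl hW2 ss commS.
  by rewrite addrA subrK subrr.
have uW : (W + dg s) \in unitmx.
  apply: pd_unit => x x0.
  rewrite mulmxDr mulmxDl mxE addrC ltr_pwDr //; first last.
    by apply: quad_dg => i; exact: sqrtr_ge0.
  have Vx0 : V *m x != 0.
    apply: contraNneq x0 => h; by rewrite -[x]mul1mx -hV -mulmxA h mulmx0.
  have := Spd _ Vx0; rewrite trmx_mul /W !mulmxA.
  done.
have W0 : W = dg s.
  apply/eqP; rewrite -subr_eq0; apply/eqP.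
  by rewrite -[W - dg s]mulmx1 -(mulmxV uW) mulmxA prod0 mul0mx.
rewrite -W0 /W !mulmxA hV' mul1mx -mulmxA hV' mulmx1 //.
Qed.

End LA.
Arguments inv_of {R n}. Arguments pd_unit {R n}. Arguments dg {R n}.
Arguments dgM {R n}. Arguments dg1 {R n}. Arguments dgD {R n}. Arguments dgB {R n}.
Arguments dgZ {R n}. Arguments dg_ext {R n u w}. Arguments ent {R m n p}.
Arguments hV' {R n V}. Arguments conjM {R n V}. Arguments conj_inv {R n V}.
Arguments mxdg_ent {R n}. Arguments dgmx_ent {R n}. Arguments comm_sqrt {R n}.
Arguments quad_dg {R n}. Arguments sqrt_unique {R n V}.

Local Open Scope classical_set_scope.
Import numFieldNormedType.Exports.
Section S.
Variable R : realType.
Notation mu := (@lebesgue_measure R).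

Lemma der_g (a x : R) : is_derive x 1 (fun y : R => 1 + y * a) a.
Proof. by apply: trigger_derive; rewrite /GRing.scale/= add0r mul1r mulr0 add0r mulr1. Qed.

Lemma der_F (a x : R) : 0 < 1 + x * a ->
  is_derive x 1 (fun y : R => a^-1 * ln (1 + y * a)) (a^-1 * ((1 + x * a)^-1 * a)).
Proof.
move=> h.
have h1 := der_g a x.
have h2 : is_derive (1 + x * a) 1 (@ln R) (1 + x * a)^-1 by exact: is_derive1_ln.
have h3 := @is_derive1_comp R (@ln R) (fun y : R => 1 + y * a) x _ _ h2 h1.
have h4 := is_deriveZ a^-1 h3.
exact: h4.
Qed.

Lemma cont_f (a : R) (x : R) : 0 < 1 + x * a -> {for x, continuous (fun y : R => (1 + y * a)^-1)}.
Proof.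
move=> h; apply: continuousV; first by rewrite gt_eqF.
apply/differentiable_continuous/derivable1_diffP.
by have [hd _] := der_g a x.
Qed.

Lemma int_inv (a lam : R) : 0 < a -> 0 <= lam ->
  mu.-integrable `[0, lam] (EFin \o (fun x => (1 + x * a)^-1)) /\
  \int[mu]_(x in `[0, lam]) (1 + x * a)^-1 = ln (1 + lam * a) / a.
Proof.
move=> a0 l0.
have pos : forall x, 0 <= x -> 0 < 1 + x * a.
  by move=> x x0; rewrite ltr_pwDl // mulr_ge0 // ltW.
have cf : {within `[0, lam], continuous (fun x : R => (1 + x * a)^-1)}.
  apply: continuous_in_subspaceT => x; rewrite inE /= in_itv /= => /andP[x0 _].
  exact: cont_f a x (pos _ x0).
split.
  by apply: continuous_compact_integrable => //; exact: segment_compact.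
have [->|lpos] := eqVneq lam 0.
  rewrite set_itv1 Rintegral_set1 mul0r addr0 ln1 mul0r //.
have lp : 0 < lam by rewrite lt_neqAle eq_sym lpos l0.
set F := fun y : R => a^-1 * ln (1 + y * a).
have dF : forall x : R, 0 <= x -> is_derive x (1:R) F ((1 + x * a)^-1).
  move=> x x0; have := der_F a x (pos _ x0).
  by rewrite mulrCA mulVf ?gt_eqF // mulr1.
have cF : forall x : R, 0 <= x -> {for x, continuous F}.
  move=> x x0; apply/differentiable_continuous/derivable1_diffP.
  by have [hd _] := dF _ x0.
rewrite /Rintegral (@continuous_FTC2 _ _ F) //=; last 2 first.
- split.
  + move=> x; rewrite in_itv /= => /andP[x0 _]; by have [hd _] := dF _ (ltW x0).
  + by apply/cvg_at_right_filter; exact: cF.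
  + by apply/cvg_at_left_filter; exact: cF.
- move=> x; rewrite in_itv /= => /andP[x0 _].
  by rewrite derive1E; have [_ ->] := dF _ (ltW x0).
by rewrite /F mul0r addr0 ln1 mulr0 subr0 mulrC.
Qed.

Lemma int_sum (I : Type) (s : seq I) (f : I -> R -> R) (lo hi : R) :
  (forall k, mu.-integrable `[lo, hi] (EFin \o f k)) ->
  mu.-integrable `[lo, hi] (EFin \o (fun x => \sum_(k <- s) f k x)) /\
  \int[mu]_(x in `[lo, hi]) (\sum_(k <- s) f k x) = \sum_(k <- s) \int[mu]_(x in `[lo, hi]) f k x.
Proof.
move=> hf; elim: s => [|k s [IHi IHe]].
  split.
    apply: (@eq_integrable _ _ _ mu _ _ (cst 0%E)) => //.
      by move=> x _ /=; rewrite big_nil.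
    exact: integrable0.
  rewrite big_nil; transitivity (\int[mu]_(x in `[lo, hi]) (0:R)).
    by apply: eq_Rintegral => x _; rewrite big_nil.
  by rewrite Rintegral_cst // mul0r.
split.
  apply: (@eq_integrable _ _ _ mu _ _ ((EFin \o f k) \+ (EFin \o (fun x => (\sum_(k <- s) f k x)%R)))%E) => //.
    by move=> x _ /=; rewrite big_cons EFinD.
  exact: integrableD.
rewrite big_cons -IHe -RintegralD //; apply: eq_Rintegral => x _; by rewrite big_cons.
Qed.
End S.
Arguments int_sum {R I}. Arguments int_inv {R a lam}.


Section EXP.
Variable R : realType.
Variables (m n : nat) (E : 'M[R]_(m, n)) (Ft : 'M[R]_(n, m)) (a : 'I_n -> R).
Hypothesis FE : Ft *m E = dg a.
Hypothesis an0 : forall k, a k != 0.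

Lemma sandw (u w : 'I_n -> R) :
  E *m dg u *m Ft *m (E *m dg w *m Ft) = E *m dg (fun k => u k * a k * w k) *m Ft.
Proof.
rewrite !mulmxA -(mulmxA _ Ft E) FE -(mulmxA E (dg u)) dgM -(mulmxA E) dgM //.
Qed.

Lemma pow_form (g : 'I_n -> R) k :
  mxpow (E *m dg g *m Ft) k.+1 = E *m dg (fun l => (a l * g l) ^+ k.+1 / a l) *m Ft.
Proof.
elim: k => [|k IH].
  rewrite /mxpow /= mulmx1; congr (_ *m _); congr (_ *m _); apply: dg_ext => l.
  by rewrite expr1 mulrC mulrA mulVf ?mul1r.
change (mxpow (E *m dg g *m Ft) k.+2) with
  ((E *m dg g *m Ft) *m mxpow (E *m dg g *m Ft) k.+1).
rewrite IH sandw; congr (_ *m _); congr (_ *m _); apply: dg_ext => l.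
by rewrite !exprS; move: ((a l * g l) ^+ k) => x; ring.
Qed.

Lemma dg0 : dg (fun _ : 'I_n => 0 : R) = 0.
Proof. by apply/matrixP => i j; rewrite !mxE mul0rn. Qed.

Lemma psum (g : 'I_n -> R) N :
  \sum_(k < N.+1) (k`!%:R)^-1 *: mxpow (E *m dg g *m Ft) k =
  1%:M + E *m dg (fun l => (series (exp_coeff (a l * g l)) N.+1 - 1) / a l) *m Ft.
Proof.
elim: N => [|N IH].
  rewrite big_ord1 /= invr1 scale1r.
  rewrite (dg_ext (w := fun _ => 0)) ?dg0 ?mulmx0 ?mul0mx ?addr0 //.
  move=> l; rewrite /series /= big_nat1 /exp_coeff /= expr0 divr1 subrr mul0r //.
rewrite big_ord_recr IH (pow_form g N) /= -addrA; congr (_ + _).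
rewrite scalemxAl scalemxAr dgZ -mulmxDl -mulmxDr dgD; congr (_ *m _); congr (_ *m _).
apply: dg_ext => l; rewrite [in RHS]seriesSr /exp_coeff /=.
move: (series _ _) ((a l * g l) ^+ N.+1) ((N.+1)`!%:R) => x y z.
by ring.
Qed.

Lemma mxexp_form (g : 'I_n -> R) :
  mxexp (E *m dg g *m Ft) =
  1%:M + E *m dg (fun l => (expR (a l * g l) - 1) / a l) *m Ft.
Proof.
apply/matrixP => i j; rewrite mxE.
set u := fun N => _.
have hv : (fun N => u N.+1) @ \oo --> (1%:M + E *m dg (fun l => (expR (a l * g l) - 1) / a l) *m Ft) i j.
  have -> : (fun N => u N.+1) = fun N =>
     1%:M i j + \sum_l E i l * ((series (exp_coeff (a l * g l)) N.+1 - 1) / a l) * Ft l j.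
    by apply/funext => N; rewrite /u psum [in LHS]mxE ent.
  rewrite [X in _ --> X]mxE ent.
  apply: cvgD; first exact: cvg_cst.
  apply: (@cvg_big R _ +%R 0 xpredT add_continuous) => // l _.
  apply: cvgMr_tmp; apply: cvgMl_tmp; apply: cvgMr_tmp; apply: cvgB; last exact: cvg_cst.
  rewrite (cvg_shiftS (fun N => series (exp_coeff (a l * g l)) N)).
  exact: is_cvg_series_exp_coeff.
have := hv; rewrite (cvg_shiftS u) => hu.
exact: cvg_lim.
Qed.

End EXP.

Section EDH.
Variable R : realType.
Variables (nx nz : nat) (P : 'M[R]_nx) (Rm : 'M[R]_nz) (H : 'M[R]_(nz, nx))
  (Rh : 'M[R]_nz) (V : 'M[R]_nz) (a : 'I_nz -> R).
Hypothesis uRh : Rh \in unitmx.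
Hypothesis hRm : Rh *m Rh = Rm.
Hypothesis hV : V^T *m V = 1%:M.
Hypothesis hD : invmx Rh *m H *m P *m H^T *m invmx Rh = V *m dg a *m V^T.
Hypothesis a0 : forall i, 0 < a i.

Let Ri := invmx Rh.
Let E := P *m H^T *m Ri *m V.
Let Ft := V^T *m Ri *m H.

Lemma inv_sandwich (A Y Z : 'M[R]_nz) : A \in unitmx -> Y *m Z = 1%:M ->
  invmx (A *m Y *m A) = invmx A *m Z *m invmx A.
Proof.
move=> uA YZ; apply: inv_of.
rewrite -!mulmxA (mulmxA A (invmx A)) mulmxV // mul1mx (mulmxA Y Z) YZ mul1mx.
by rewrite mulmxV.
Qed.

Lemma HPH : H *m P *m H^T = Rh *m (V *m dg a *m V^T) *m Rh.
Proof.
by rewrite -hD !mulmxA mulmxV // mul1mx -[RHS]mulmxA mulVmx // mulmx1.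
Qed.

Lemma edhA_form (mu : R) : 0 <= mu ->
  edhA P Rm H mu = E *m dg (fun k => - 2^-1 * (1 + mu * a k)^-1) *m Ft.
Proof.
move=> mu0.
have pos : forall k, 0 < 1 + mu * a k.
  by move=> k; rewrite ltr_pwDl // mulr_ge0 // ltW.
set Y := V *m dg (fun k => 1 + mu * a k) *m V^T.
set Z := V *m dg (fun k => (1 + mu * a k)^-1) *m V^T.
have YZ : Y *m Z = 1%:M.
  rewrite /Y /Z conjM // (dg_ext (w := fun _ => 1)) ?dg1 ?mulmx1 ?hV' //.
  by move=> k; rewrite mulfV // gt_eqF.
have hY : Y = 1%:M + mu *: (V *m dg a *m V^T).
  have e : dg (fun k => 1 + mu * a k) = 1%:M + mu *: dg a by rewrite -dg1 dgZ dgD.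
  by rewrite /Y e mulmxDr mulmxDl mulmx1 hV' // -scalemxAr -scalemxAl.
have M : mu *: (H *m P *m H^T) + Rm = Rh *m Y *m Rh.
  rewrite HPH -hRm hY mulmxDr mulmxDl mulmx1 -scalemxAr -scalemxAl addrC //.
have Minv : invmx (mu *: (H *m P *m H^T) + Rm) = Ri *m Z *m Ri.
  by rewrite M; apply: inv_sandwich.
rewrite /edhA Minv /E /Ft /Z -dgZ.
by rewrite -!scalemxAr -!scalemxAl !mulmxA.
Qed.

Notation mu := (@lebesgue_measure R).

Lemma mxint_form (lam : R) : 0 <= lam ->
  mxint (edhA P Rm H) 0 lam =
  E *m dg (fun k => - 2^-1 * (ln (1 + lam * a k) / a k)) *m Ft.
Proof.
move=> l0; apply/matrixP => i j; rewrite mxE ent.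
transitivity (\int[mu]_(x in `[0, lam])
   \sum_(k <- index_enum 'I_nz) (E i k * - 2^-1 * Ft k j * (1 + x * a k)^-1)).
  apply: eq_Rintegral => x; rewrite inE /= in_itv /= => /andP[x0 _].
  rewrite edhA_form // ent; apply: eq_bigr => k _.
  by rewrite mulrA -[RHS]mulrA [Ft k j * _]mulrC mulrA.
have hint : forall k, mu.-integrable `[0, lam]
    (EFin \o (fun x => E i k * - 2^-1 * Ft k j * (1 + x * a k)^-1)).
  move=> k.
  have [ii _] := int_inv (a0 k) l0.
  apply: (@eq_integrable _ _ _ mu _ _ (fun x => ((E i k * - 2^-1 * Ft k j)%:E * (EFin \o (fun x : R => ((1 + x * a k)^-1)%R)) x)%E)) => //; try (by move=> x _ /=; rewrite EFinM).
  exact: integrableZl.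
have [_ ->] := int_sum (index_enum 'I_nz)
   (fun k x => E i k * - 2^-1 * Ft k j * (1 + x * a k)^-1) 0 lam hint.
apply: eq_bigr => k _.
have [ii ee] := int_inv (a0 k) l0.
rewrite RintegralZl // ee -!mulrA; congr (_ * _); rewrite mulrCA.
by ring.
Qed.

End EDH.

End Helpers.
Import Helpers.

Theorem mainTheorem2 (R : realType) (nx nz : nat)
  (P : 'M[R]_nx) (Rm : 'M[R]_nz) (H : 'M[R]_(nz, nx))
  (Rh : 'M[R]_nz) (V : 'M[R]_nz) (alpha : 'rV[R]_nz)
  (Sq : R -> 'M[R]_nz) :
  sym_posdef P -> sym_posdef Rm -> \rank H = nz ->
  (* Rh = R^{1/2}: the symmetric positive definite square root of R *)
  sym_posdef Rh -> Rh *m Rh = Rm ->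
  (* D = R^{-1/2} H P H^T R^{-1/2} = V Lambda V^T, V orthogonal, alpha_i > 0 *)
  V^T *m V = 1%:M ->
  invmx Rh *m H *m P *m H^T *m invmx Rh = V *m diag_mx alpha *m V^T ->
  (forall i, 0 < alpha 0 i) ->
  (* Sq lam = (I + lam D)^{1/2}: symmetric positive definite square root *)
  (forall lam : R, 0 <= lam <= 1 ->
     sym_posdef (Sq lam) /\
     Sq lam *m Sq lam = 1%:M + lam *: (invmx Rh *m H *m P *m H^T *m invmx Rh)) ->
  forall lam : R, 0 <= lam <= 1 ->
    edhPhi P Rm H lam =
      1%:M + P *m H^T *m invmx Rh *m (invmx (Sq lam) - 1%:M)
             *m invmx (invmx Rh *m H *m P *m H^T *m invmx Rh) *m invmx Rh *m H
    /\
    edhPhi P Rm H lam =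
      1%:M + (P *m H^T *m invmx Rh *m V)
             *m diag_mx (\row_i (((1 + lam * alpha 0 i) ^-1 `^ 2^-1 - 1) / alpha 0 i))
             *m (V^T *m invmx Rh *m H).
Proof.
move=> Ppd Rmpd rkH Rhpd hRm hV hD ha hSq lam hl.
have /andP[l0 l1] := hl.
set a := fun i => alpha 0 i.
have da : diag_mx alpha = dg a by congr diag_mx; apply/rowP => i; rewrite mxE.
rewrite da in hD.
have uRh : Rh \in unitmx by apply: pd_unit; case: Rhpd.
have a0 : forall i, 0 < a i := ha.
have an0 : forall k, a k != 0 by move=> k; rewrite gt_eqF.
have FE : (V^T *m invmx Rh *m H) *m (P *m H^T *m invmx Rh *m V) = dg a.
  have -> : (V^T *m invmx Rh *m H) *m (P *m H^T *m invmx Rh *m V) =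
            V^T *m (invmx Rh *m H *m P *m H^T *m invmx Rh) *m V by rewrite !mulmxA.
  by rewrite hD !mulmxA hV mul1mx -mulmxA hV mulmx1.
set g := fun k => - 2^-1 * (ln (1 + lam * a k) / a k).
have Phi : edhPhi P Rm H lam = 1%:M + (P *m H^T *m invmx Rh *m V) *m
     dg (fun l => (expR (a l * g l) - 1) / a l) *m (V^T *m invmx Rh *m H).
  rewrite /edhPhi (@mxint_form R nx nz P Rm H Rh V a uRh hRm hV hD a0 lam l0).
  exact: (@mxexp_form R nx nz _ _ a FE an0 g).
have w_eq : forall l, (expR (a l * g l) - 1) / a l =
    ((1 + lam * a l)^-1 `^ 2^-1 - 1) / a l.
  move=> l; congr ((_ - 1) / _).
  have pos : 0 < 1 + lam * a l by rewrite ltr_pwDl // mulr_ge0 // ltW.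
  rewrite /powR invr_eq0 gt_eqF // lnV ?posrE //; congr expR; rewrite /g.
  by field; exact: an0.
rewrite (dg_ext w_eq) in Phi.
split; last by rewrite Phi.
rewrite Phi; congr (_ + _).
have [Sqpd Sq2] := hSq lam hl.
set d := fun k => 1 + lam * a k.
have dpos : forall k, 0 < d k by move=> k; rewrite /d ltr_pwDl // mulr_ge0 // ltW.
have hSq2 : Sq lam *m Sq lam = V *m dg d *m V^T.
  rewrite Sq2 hD.
  have e : dg d = 1%:M + lam *: dg a by rewrite -dg1 dgZ dgD.
  by rewrite e mulmxDr mulmxDl mulmx1 (hV' hV) -scalemxAr -scalemxAl.
have Sqe := sqrt_unique hV (Sq lam) d (fun k => ltW (dpos k)) Sqpd hSq2.
have iSq : invmx (Sq lam) = V *m dg (fun k => (Num.sqrt (d k))^-1) *m V^T.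
  rewrite Sqe; apply: (conj_inv hV) => k.
  by rewrite mulfV // gt_eqF // sqrtr_gt0.
have iD : invmx (invmx Rh *m H *m P *m H^T *m invmx Rh) =
          V *m dg (fun k => (a k)^-1) *m V^T.
  by rewrite hD; apply: (conj_inv hV) => k; rewrite mulfV.
have e1 : V *m dg (fun k => (Num.sqrt (d k))^-1) *m V^T - 1%:M =
          V *m (dg (fun k => (Num.sqrt (d k))^-1) - dg (fun _ => 1)) *m V^T.
  by rewrite dg1 mulmxBr mulmxBl mulmx1 (hV' hV).
rewrite dgB in e1.
have key : (V *m dg (fun k => (Num.sqrt (d k))^-1) *m V^T - 1%:M) *m
           (V *m dg (fun k => (a k)^-1) *m V^T) =
           V *m dg (fun l => ((1 + lam * a l)^-1 `^ 2^-1 - 1) / a l) *m V^T.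
  rewrite e1 (conjM hV); congr (_ *m _); congr (_ *m _); apply: dg_ext => l.
  have dl := dpos l; rewrite /d in dl *.
  rewrite powR12_sqrt; last by rewrite invr_ge0 ltW.
  by rewrite sqrtrV // ltW.
rewrite iSq iD -[in RHS](mulmxA (P *m H^T *m invmx Rh)) key.
by rewrite !mulmxA.
Qed.
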